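(* Let $p$ be an odd prime, let $l\ge 3$ be an odd integer with $l\mid p-1$, and let $\omega$ be a primitive $l$-th root of unity in $\mathbb{F}_p$. Then the cyclic code $\mathcal{C}_1$ of length $lp$ over $\mathbb{F}_p$ generated by $g_1(x)=(x-1)^4(x-\omega)(x-\omega^2)$ is an AMDS symbol-pair code with minimum symbol-pair distance $7$.
   Context: For $\mathbf{x}=(x_0,\dots,x_{n-1})\in\mathbb{F}_p^n$, the symbol-pair distance is $D_p(\mathbf{x},\mathbf{y})=|\{i:(x_i,x_{i+1})\neq(y_i,y_{i+1})\}|$ (indices modulo $n$); the minimum symbol-pair distance $d_p$ is the minimum of $D_p$ over distinct codewords. A code $\mathcal{C}$ of length $n$ with minimum symbol-pair distance $d_p$ is an AMDS (almost MDS) symbol-pair code if $|\mathcal{C}|=p^{n-d_p+1}$. The cyclic code generated by $g(x)\mid x^n-1$ is the ideal $\langle g(x)\rangle$ in $\mathbb{F}_p[x]/\langle x^n-1\rangle$. *)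

(* Defs.v *)
From mathcomp Require Import all_boot all_algebra.
From mathcomp Require Import boolp.
Set Implicit Arguments. Unset Strict Implicit. Unset Printing Implicit Defensive.
Import GRing.Theory.
Local Open Scope ring_scope.

Definition vec_poly (F : fieldType) (n : nat) (c : 'rV[F]_n) : {poly F} :=
  \sum_(i < n) c ord0 i *: 'X^i.

(* Cyclic code generated by g: the ideal <g(x)> of F[x]/<x^n - 1>,
   i.e. the vectors whose polynomial is (f * g) mod (x^n - 1) for some f. *)
Definition cyclic_code (F : finFieldType) (n : nat) (g : {poly F})
  : {set 'rV[F]_n} :=
  [set c | `[< exists f : {poly F}, vec_poly c = (f * g) %% ('X^n - 1) >]].

Definition pair_dist (F : finType) (n : nat) (x y : 'rV[F]_n) : nat :=
  #|[set i : 'I_n | (x ord0 i != y ord0 i) || (x ord0 (ordS i) != y ord0 (ordS i))]|.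

Definition min_pair_dist (F : finType) (n : nat) (C : {set 'rV[F]_n}) (d : nat)
  : Prop :=
  (exists x y, [/\ x \in C, y \in C, x != y & pair_dist x y = d]) /\
  (forall x y, x \in C -> y \in C -> x != y -> (d <= pair_dist x y)%N).

Definition AMDS_pair_code (F : finFieldType) (n : nat) (C : {set 'rV[F]_n})
  (d : nat) : Prop :=
  min_pair_dist C d /\ #|C| = (#|F| ^ (n - d + 1))%N.

(* Main.v *)
Require Import Defs.
From mathcomp Require Import all_boot all_algebra zify ring.
From mathcomp Require Import boolp.
Set Implicit Arguments. Unset Strict Implicit. Unset Printing Implicit Defensive.
Import GRing.Theory.
Local Open Scope ring_scope.

Section Gen.
Variable F : fieldType.

Lemma dvdp_big (I : Type) (r : seq I) (P : pred I) (f : I -> {poly F}) d :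
  (forall i, P i -> d %| f i) -> d %| \sum_(i <- r | P i) f i.
Proof.
move=> H; apply: (big_ind (fun q => d %| q)) => //.
idtac.
by move=> x y; apply: dvdp_add.
Qed.

Lemma dvdp_deriv_pow (c : F) m q :
  ('X - c%:P) ^+ m.+1 %| q -> ('X - c%:P) ^+ m %| q^`().
Proof.
case/dvdpP=> r ->; rewrite derivM deriv_exp derivXsubC mul1r /=.
apply: dvdp_add; first by rewrite exprS mulrA dvdp_mull // dvdp_mulIr.
by rewrite -mulr_natl dvdp_mull // dvdp_mull.
Qed.

End Gen.

Section Gen2.
Variable F : finFieldType.

Lemma partner (I : finType) (c : I -> F) (z : I -> F) (t : nat) :
  (forall h : {poly F}, (size h <= t)%N -> \sum_i c i * h.[z i] = 0) ->
  (#|[set z i | i in [set i | c i != 0%R]]| <= t)%N ->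
  forall i0, c i0 != 0 -> exists j, [/\ j != i0, c j != 0 & z j = z i0].
Proof.
move=> Hh Hc i0 ci0.
case: (pickP (fun j => [&& j != i0, c j != 0 & z j == z i0])) => [j /and3P [a b /eqP e]|none].
  by exists j.
exfalso.
set Z := [set z i | i in [set i | c i != 0]].
have zi0 : z i0 \in Z by apply/imsetP; exists i0; rewrite // inE.
set h := \prod_(w in Z :\ z i0) ('X - w%:P).
have sh : size h = #|Z|.
  by rewrite /h -big_enum size_prod_XsubC -cardE (cardsD1 (z i0) Z) zi0.
have := Hh h; rewrite sh => /(_ Hc).
rewrite (bigD1 i0) //= big1 ?addr0.
  apply/eqP; rewrite mulf_neq0 //.
  rewrite /h horner_prod; apply/prodf_neq0 => w; rewrite !inE => /andP [wz _].
  by rewrite hornerXsubC subr_eq0 eq_sym.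
move=> j ji0; case: (eqVneq (c j) 0) => [->|cj]; first by rewrite mul0r.
have zj : z j != z i0.
  by apply/negP => e; have := none j; rewrite ji0 cj e.
have zjZ : z j \in Z :\ z i0.
  by rewrite !inE zj /=; apply/imsetP; exists j; rewrite // inE.
by rewrite /h horner_prod (bigD1 (z j)) //= hornerXsubC subrr mul0r mulr0.
Qed.

End Gen2.

Lemma uniq_card (T : finType) (S : {set T}) (s : seq T) :
  uniq s -> all (fun x => x \in S) s -> (size s <= #|S|)%N.
Proof.
move=> us /allP al; rewrite cardE; apply: uniq_leq_size => // x xs.
by rewrite mem_enum; apply: al.
Qed.

Lemma sum4 (T : finType) (R : nmodType) (f : T -> R) x1 x2 x3 x4 :
  uniq [:: x1; x2; x3; x4] ->
  (forall i, i \notin [:: x1; x2; x3; x4] -> f i = 0) ->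
  \sum_i f i = f x1 + f x2 + f x3 + f x4.
Proof.
move=> u H.
rewrite (bigID (fun i => i \in [:: x1; x2; x3; x4])) /= [X in _ + X]big1 ?addr0; last first.
  by move=> i /H.
rewrite -big_uniq //.
by rewrite unlock /= addr0 !addrA.
Qed.

Lemma iter_ordS_val n (x : 'I_n) k : (iter k (@ordS n) x : nat) = ((x + k) %% n)%N.
Proof.
elim: k => [|k IH]; first by rewrite addn0 modn_small.
rewrite iterS /= IH addnS.
have n0 : (0 < n)%N by case: n x {IH} => [[]|].
by rewrite -[((x + k) %% n).+1]addn1 -[(x + k).+1]addn1 modnDml.
Qed.

Lemma closed_full n (S : {set 'I_n}) x0 :
  x0 \in S -> (forall x, x \in S -> ordS x \in S) -> forall y, y \in S.
Proof.
move=> x0S H y.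
have K : forall k, iter k (@ordS n) x0 \in S.
  by elim=> [|k IH] //=; apply: H.
have -> : y = iter (n - x0 + y) (@ordS n) x0; last exact: K.
apply: val_inj; rewrite /= iter_ordS_val addnA subnKC; last exact: ltnW.
by rewrite modnDl modn_small.
Qed.

Lemma uniq4 (T : eqType) (x1 x2 x3 x4 : T) :
  x1 != x2 -> x1 != x3 -> x1 != x4 -> x2 != x3 -> x2 != x4 -> x3 != x4 ->
  uniq [:: x1; x2; x3; x4].
Proof.
by move=> h12 h13 h14 h23 h24 h34; rewrite /= !inE !negb_or h12 h13 h14 h23 h24 h34.
Qed.

Lemma uniq5 (T : eqType) (x1 x2 x3 x4 x5 : T) :
  x1 != x2 -> x1 != x3 -> x1 != x4 -> x1 != x5 -> x2 != x3 -> x2 != x4 ->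
  x2 != x5 -> x3 != x4 -> x3 != x5 -> x4 != x5 ->
  uniq [:: x1; x2; x3; x4; x5].
Proof.
move=> h12 h13 h14 h15 h23 h24 h25 h34 h35 h45.
by rewrite /= !inE !negb_or h12 h13 h14 h15 h23 h24 h25 h34 h35 h45.
Qed.

Lemma mod_lt2n n a : (a < n + n)%N -> (a %% n = if (a < n)%N then a else a - n)%N.
Proof.
move=> h2; case: ltnP => h1; first exact: modn_small.
by rewrite -{1}(subnK h1) modnDr modn_small //; lia.
Qed.

Section VP.
Variable F : fieldType.
Variable m : nat.
Lemma coef_vec_poly (c : 'rV[F]_m) (i : 'I_m) : (vec_poly c)`_i = c ord0 i.
Proof. by rewrite /vec_poly coef_sumMXn big_pred1_eq. Qed.

Lemma coef_vec_poly_out (c : 'rV[F]_m) j : (m <= j)%N -> (vec_poly c)`_j = 0.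
Proof.
move=> Hj; rewrite /vec_poly coef_sumMXn big1 // => i /eqP Hi.
by move: (ltn_ord i); rewrite Hi ltnNge Hj.
Qed.

Lemma size_vec_poly (c : 'rV[F]_m) : (size (vec_poly c) <= m)%N.
Proof. by apply/leq_sizeP => j; apply: coef_vec_poly_out. Qed.

Lemma vec_polyB (x y : 'rV[F]_m) : vec_poly (x - y) = vec_poly x - vec_poly y.
Proof.
by rewrite /vec_poly -sumrB; apply: eq_bigr => i _; rewrite !mxE scalerBl.
Qed.


Lemma vec_poly_inj (x y : 'rV[F]_m) : vec_poly x = vec_poly y -> x = y.
Proof.
move=> H; apply/matrixP => i j; rewrite [i]ord1.
by rewrite -!coef_vec_poly H.
Qed.

Definition row_of (q : {poly F}) : 'rV[F]_m := \row_(i < m) q`_i.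

Lemma vec_poly_row_of (q : {poly F}) : (size q <= m)%N -> vec_poly (row_of q) = q.
Proof.
move=> Hq; apply/polyP => k; case: (ltnP k m) => Hk.
  by rewrite (coef_vec_poly _ (Ordinal Hk)) mxE.
by rewrite coef_vec_poly_out //; move/leq_sizeP: Hq => ->.
Qed.


Lemma row_of_vec_poly (c : 'rV[F]_m) : row_of (vec_poly c) = c.
Proof. by apply/matrixP => i j; rewrite [i]ord1 mxE coef_vec_poly. Qed.

End VP.

Lemma card_val_in n (s : seq nat) : uniq s -> all (fun k => (k < n)%N) s ->
  #|[set i : 'I_n | val i \in s]| = size s.
Proof.
move=> us /allP alls.
rewrite cardE -(size_map val); apply: perm_size; apply: uniq_perm => //.
  by rewrite map_inj_uniq ?enum_uniq //; exact: val_inj.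
move=> k; apply/mapP/idP => [[i]|ks].
  by rewrite mem_enum inE => H ->.
by exists (Ordinal (alls k ks)); rewrite // mem_enum inE.
Qed.

Section Main.
Variables (p l : nat) (omega : 'F_p).
Hypotheses (pr_p : prime p) (odd_p : odd p) (odd_l : odd l) (l3 : (3 <= l)%N)
  (ldvd : (l %| p.-1)%N) (prim : l.-primitive_root omega).

Local Notation n := (l * p)%N.
Local Notation F := 'F_p.

Lemma p_ge5 : (5 <= p)%N.
Proof.
have p2 := prime_gt1 pr_p.
have H1 : (0 < p.-1)%N by case: p p2 => [|[|]].
have := dvdn_leq H1 ldvd => H2.
have H3 : (4 <= p)%N by case: p p2 H2 => [|q] //= _ H; apply: leq_trans l3 H.
move: H3; rewrite leq_eqVlt => /orP [/eqP p4|//].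
by move: odd_p; rewrite -p4.
Qed.

Lemma n_ge15 : (15 <= n)%N.
Proof. by have := leq_mul l3 p_ge5. Qed.

Lemma n_gt0 : (0 < n)%N.
Proof. by apply: leq_trans n_ge15. Qed.

Lemma l_le : (l <= p.-1)%N.
Proof.
have p2 := prime_gt1 pr_p.
have H1 : (0 < p.-1)%N by case: p p2 => [|[|]].
exact: dvdn_leq H1 ldvd.
Qed.

Lemma cop_lp : coprime l p.
Proof.
rewrite coprime_sym prime_coprime //; apply/negP => /dvdn_leq.
have l0 : (0 < l)%N by apply: leq_trans l3.
move=> /(_ l0) H; have := l_le; have := p_ge5; lia.
Qed.

Lemma om_l : omega ^+ l = 1.
Proof. exact: prim_expr_order. Qed.

Lemma om_n : omega ^+ n = 1.
Proof. by rewrite exprM om_l expr1n. Qed.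

Lemma om_pm1 : omega ^+ p.-1 = 1.
Proof. by case/dvdnP: ldvd => k ->; rewrite mulnC exprM om_l expr1n. Qed.

Lemma om_neq1 : omega != 1.
Proof.
by rewrite -[omega]expr1 -(prim_order_dvd prim); apply/negP => /dvdn_leq H; have := H isT; clear H; lia.
Qed.

Lemma om2_neq1 : omega ^+ 2 != 1.
Proof.
by rewrite -(prim_order_dvd prim); apply/negP => /dvdn_leq H; have := H isT; clear H; lia.
Qed.

Lemma om_neq0 : omega != 0.
Proof. by apply/eqP => om0; move: om_l; rewrite om0 expr0n; case: l l3. Qed.

Lemma om2_neq_om : omega ^+ 2 != omega.
Proof.
apply/eqP => H; have : omega * omega = 1 * omega by rewrite mul1r -expr2 H.
by move/(mulIf om_neq0)/eqP; rewrite (negPf om_neq1).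
Qed.

Local Notation g := (('X - 1) ^+ 4 * ('X - omega%:P) * ('X - (omega ^+ 2)%:P) : {poly F}).

Lemma g_dvdP (P : {poly F}) :
  (g %| P) = [&& ('X - 1) ^+ 4 %| P, root P omega & root P (omega ^+ 2)].
Proof.
have cA : coprimep (('X - 1) ^+ 4) ('X - omega%:P).
  by rewrite coprimep_XsubC -polyC1 root_exp_XsubC om_neq1.
have cB : coprimep (('X - 1) ^+ 4 * ('X - omega%:P)) ('X - (omega ^+ 2)%:P).
  by rewrite coprimep_XsubC rootM negb_or -polyC1 root_exp_XsubC om2_neq1 /= root_XsubC om2_neq_om.
by rewrite Gauss_dvdp // Gauss_dvdp // !dvdp_XsubCl andbA.
Qed.

Lemma X1p : ('X - 1 : {poly F}) ^+ p = 'X^p - 1.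
Proof.
have chP : p \in [char {poly F}] by rewrite pchar_poly; exact: pchar_Fp.
rewrite -(Frobenius_autE chP) Frobenius_autB_comm ?Frobenius_autE ?expr1n //.
exact: commr1.
Qed.

Lemma X14_dvd : ('X - 1 : {poly F}) ^+ 4 %| 'X^p - 1.
Proof. by rewrite -X1p dvdp_exp2l // (leq_trans _ p_ge5). Qed.

Lemma g_dvd_Xn : g %| 'X^n - 1.
Proof.
rewrite g_dvdP; apply/and3P; split.
- apply: dvdp_trans X14_dvd _.
  rewrite mulnC exprM [X in _ %| X]subrX1; apply: dvdp_mulr; exact: dvdpp.
- by apply/rootP; rewrite !hornerE om_n subrr.
- by apply/rootP; rewrite !hornerE exprAC om_n expr1n subrr.
Qed.

Lemma size_Xn1 : size ('X^n - 1 : {poly F}) = n.+1.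
Proof. by rewrite -polyC1 size_XnsubC // n_gt0. Qed.

Lemma memC (c : 'rV[F]_n) : (c \in cyclic_code n g) = (g %| vec_poly c).
Proof.
rewrite /cyclic_code inE; apply/asboolP/idP.
  by case=> f ->; rewrite -(dvdp_mod _ g_dvd_Xn) dvdp_mull.
move=> H; exists (vec_poly c %/ g); rewrite divpK // modp_small //.
by rewrite size_Xn1 ltnS size_vec_poly.
Qed.

Lemma g_monic : g \is monic.
Proof. by rewrite !monicMr ?monic_exp ?monicXsubC // -polyC1 monicXsubC. Qed.

Lemma size_g : size g = 7%N.
Proof.
rewrite -polyC1.
have A0 : ('X - 1%:P : {poly F}) ^+ 4 != 0 by rewrite -size_poly_gt0 size_exp_XsubC.
have B0 : ('X - omega%:P) != 0 by rewrite -size_poly_gt0 size_XsubC.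
rewrite size_Mmonic ?monicXsubC ?mulf_neq0 //.
rewrite size_Mmonic ?monicXsubC // size_exp_XsubC !size_XsubC //.
all: by rewrite -size_poly_gt0 size_XsubC.
Qed.

Lemma g_neq0 : g != 0.
Proof. by rewrite -size_poly_gt0 size_g. Qed.

Definition phi (v : 'rV[F]_(n - 6)) : 'rV[F]_n := row_of n (vec_poly v * g).

Lemma size_mulg (q : {poly F}) : (size q <= n - 6)%N -> (size (q * g)%R <= n)%N.
Proof.
have := n_ge15; case: (eqVneq q 0) => [->|q0]; first by rewrite mul0r size_poly0.
rewrite size_Mmonic ?g_monic // size_g addnS /=; lia.
Qed.

Lemma vec_poly_phi v : vec_poly (phi v) = vec_poly v * g.
Proof. by rewrite vec_poly_row_of // size_mulg // size_vec_poly. Qed.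

Lemma phi_inj : injective phi.
Proof.
move=> v w H; apply: vec_poly_inj; apply: (mulIf g_neq0).
by rewrite -!vec_poly_phi H.
Qed.

Lemma C_im : cyclic_code n g = [set phi v | v in [set: 'rV[F]_(n - 6)]].
Proof.
apply/setP => c; rewrite memC; apply/idP/imsetP.
- move=> H; set q := vec_poly c %/ g.
  have Hq : vec_poly c = q * g by rewrite divpK.
  have sq : (size q <= n - 6)%N.
    case: (eqVneq q 0) => [->|q0]; first by rewrite size_poly0.
    have := size_vec_poly c; rewrite Hq size_Mmonic ?g_monic // size_g addnS /=; have := n_ge15; move: (size q) => k; lia.
  exists (row_of (n - 6) q); first by rewrite inE.
  apply: vec_poly_inj; rewrite vec_poly_phi vec_poly_row_of //.
- by case=> v _ ->; rewrite vec_poly_phi dvdp_mull.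
Qed.

Lemma card_C : #|cyclic_code n g| = (#|F| ^ (n - 7 + 1))%N.
Proof.
rewrite C_im card_imset; last exact: phi_inj.
rewrite cardsT card_mx mul1n; congr (_ ^ _)%N; have := n_ge15; lia.
Qed.

Definition P0 : {poly F} := ('X^p - 1) * ('X^(p.-1) - 1).

Lemma coef_P0 k : P0`_k =
  ((k == p + p.-1)%:R - (k == p)%:R) - ((k == p.-1)%:R - (k == 0)%:R).
Proof.
by rewrite /P0 mulrBl mulrBr mul1r mulr1 -exprD !coefB !coefXn coef1.
Qed.

Lemma P0_nz k : (P0`_k != 0) = [|| k == 0, k == p.-1, k == p | k == p + p.-1].
Proof.
have H5 := p_ge5; rewrite coef_P0.
case: (k == p + p.-1) / eqP => e1; case: (k == p) / eqP => e2;
  case: (k == p.-1) / eqP => e3; case: (k == 0) / eqP => e4;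
  try (exfalso; lia).
all: by rewrite /= ?subr0 ?sub0r ?opprK ?oppr_eq0 ?oner_eq0 ?orbT.
Qed.

Definition c0 : 'rV[F]_n := row_of n P0.

Lemma size_P0 : (size P0 <= n)%N.
Proof.
have H1 := leq_mul l3 (leqnn p); have H2 := p_ge5.
rewrite (leq_trans (size_mul_leq _ _)) // -polyC1 !size_XnsubC //; rewrite -?subn1; lia.
Qed.

Lemma c0_in : c0 \in cyclic_code n g.
Proof.
rewrite memC vec_poly_row_of ?size_P0 // g_dvdP; apply/and3P; split.
- exact: dvdp_mulr X14_dvd.
- by rewrite rootM; apply/orP; right; apply/rootP; rewrite !hornerE om_pm1 subrr.
- by rewrite rootM; apply/orP; right; apply/rootP; rewrite !hornerE exprAC om_pm1 expr1n subrr.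
Qed.

Lemma c0_dist : pair_dist c0 0 = 7%N.
Proof.
have H5 := p_ge5; have Hn := leq_mul l3 (leqnn p).
rewrite /pair_dist (_ : [set i | _] =
   [set i : 'I_n | val i \in [:: 0; p.-1; p; p + p.-1; p.-2; p + p.-2; n.-1]]%N).
  rewrite card_val_in //=; first by rewrite !inE; lia.
  by apply/and5P; split; lia.
apply/setP => -[k hk]; rewrite !inE !mxE !P0_nz /=.
case: (ltnP k.+1 n) => h.
  rewrite modn_small //; lia.
have -> : k.+1 = n by lia.
rewrite modnn; lia.
Qed.

Lemma horner_vec_poly (c : 'rV[F]_n) z :
  (vec_poly c).[z] = \sum_(i < n) c ord0 i * z ^+ i.
Proof.
by rewrite /vec_poly horner_sum; apply: eq_bigr => i _; rewrite hornerZ hornerXn.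
Qed.

Lemma root1_of (P : {poly F}) : ('X - 1) ^+ 4 %| P -> root P 1.
Proof.
move=> H; rewrite -dvdp_XsubCl polyC1; apply: dvdp_trans H.
by rewrite -{1}(expr1 ('X - 1)) dvdp_exp2l.
Qed.

Lemma W_mom (c : 'rV[F]_n) : c \in cyclic_code n g ->
  forall h : {poly F}, (size h <= 3)%N ->
  \sum_(i < n) c ord0 i * h.[omega ^+ i] = 0.
Proof.
rewrite memC g_dvdP => /and3P [H1 H2 H3] h sh.
have E : forall k : 'I_3, (vec_poly c).[omega ^+ k] = 0.
  case=> [[|[|[|]]]] // Hk; apply/rootP => /=.
  - by rewrite expr0; exact: root1_of.
  - by rewrite expr1.
  - by [].
under eq_bigr => i _ do rewrite (horner_coef_wide _ sh) mulr_sumr.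
rewrite exchange_big big1 // => k _.
transitivity (h`_k * (vec_poly c).[omega ^+ k]); last by rewrite E mulr0.
rewrite horner_vec_poly mulr_sumr; apply: eq_bigr => i _.
by rewrite mulrCA exprAC.
Qed.

Definition th (q : {poly F}) := 'X * q^`().

Definition Qp (a : 'I_n -> F) : {poly F} := \sum_(i < n) a i *: 'X^i.

Lemma th_Qp a : th (Qp a) = Qp (fun i => a i * (i : nat)%:R).
Proof.
rewrite /th /Qp raddf_sum mulr_sumr; apply: eq_bigr => i _.
rewrite /= derivZ derivXn -scalerAr [in LHS]mulrnAr mulr_natr -scalerMnr scalerMnl.
by case: (nat_of_ord i) => [|k] //=; rewrite ?mulr0n ?scale0r // exprS.
Qed.

Lemma iter_th_Qp a k :
  iter k th (Qp a) = Qp (fun i => a i * ((i : nat)%:R) ^+ k).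
Proof.
elim: k => [|k IH].
  by congr Qp; apply: funext => i; rewrite expr0 mulr1.
by rewrite iterS IH th_Qp; congr Qp; apply: funext => i; rewrite exprSr mulrA.
Qed.

Lemma dvdp_th m q : ('X - 1) ^+ m.+1 %| q -> ('X - 1) ^+ m %| th q.
Proof. by rewrite -polyC1 => /dvdp_deriv_pow H; apply: dvdp_mull. Qed.

Lemma M_mom (c : 'rV[F]_n) : c \in cyclic_code n g ->
  forall h : {poly F}, (size h <= 4)%N ->
  \sum_(i < n) c ord0 i * h.[(i : nat)%:R] = 0.
Proof.
rewrite memC g_dvdP => /and3P [H1 _ _] h sh.
have Ev : vec_poly c = Qp (c ord0) by [].
have D : forall k, (k <= 4)%N -> ('X - 1) ^+ (4 - k) %| iter k th (vec_poly c).
  elim=> [|k IH] Hk; first by rewrite subn0.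
  rewrite iterS; apply: dvdp_th; rewrite -subSn //; apply: IH; exact: ltnW.
have E : forall k : 'I_4, \sum_(i < n) c ord0 i * ((i : nat)%:R) ^+ k = 0.
  move=> k; have Dk := D k (ltnW (ltn_ord k)).
  have R1 : root (iter k th (vec_poly c)) 1.
    rewrite -dvdp_XsubCl polyC1; apply: dvdp_trans Dk.
    rewrite -{1}(expr1 ('X - 1)) dvdp_exp2l //; have := ltn_ord k; lia.
  move/rootP: R1; rewrite Ev iter_th_Qp /Qp horner_sum => H; apply: etrans _ H.
  by apply: eq_bigr => i _; rewrite hornerZ hornerXn expr1n mulr1.
under eq_bigr => i _ do rewrite (horner_coef_wide _ sh) mulr_sumr.
rewrite exchange_big big1 // => k _.
transitivity (h`_k * \sum_(i < n) c ord0 i * ((i : nat)%:R) ^+ k); last by rewrite E mulr0.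
rewrite mulr_sumr; apply: eq_bigr => i _.
by rewrite mulrCA.
Qed.

Definition av (i : 'I_n) : F := (i : nat)%:R.
Definition bv (i : 'I_n) : F := omega ^+ i.

Lemma av_S i : av (ordS i) = av i + 1.
Proof.
rewrite /av /= -(Fp_nat_mod pr_p (i.+1 %% (l * p))) modn_dvdm ?dvdn_mull //.
by rewrite Fp_nat_mod // natr1.
Qed.

Lemma bv_S i : bv (ordS i) = bv i * omega.
Proof. by rewrite /bv /= expr_mod ?om_n // exprSr. Qed.

Lemma natF_eq i j : ((i%:R : F) == j%:R) = (i == j %[mod p]).
Proof.
wlog le : i j / (i <= j)%N.
  move=> W; case: (leqP i j) => h; first exact: W.
  by rewrite eq_sym (W j i (ltnW h)) eq_sym.
have E := eqn_mod_dvd p le.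
have E2 := dvdn_pcharf (pchar_Fp pr_p) (j - i).
rewrite natrB // subr_eq0 in E2.
by rewrite [RHS]eq_sym E E2 eq_sym.
Qed.

Lemma crt (i j : 'I_n) : av i = av j -> bv i = bv j -> i = j.
Proof.
move=> /eqP ha /eqP hb; apply: val_inj => /=.
rewrite /av natF_eq in ha; rewrite /bv (eq_prim_root_expr prim) in hb.
have : (i == j %[mod n]) by rewrite chinese_remainder ?cop_lp // hb ha.
by rewrite !modn_small // => /eqP.
Qed.

Lemma crt2 (i j : 'I_n) : av i = av j -> bv i ^+ 2 = bv j ^+ 2 -> i = j.
Proof.
move=> ha hb; apply: (@crt i j ha); apply/eqP; rewrite /bv (eq_prim_root_expr prim).
have p2 : l.-primitive_root (omega ^+ 2) by rewrite prim_root_exp_coprime // coprime2n.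
move: hb; rewrite /bv -!exprM mulnC [(j * 2)%N]mulnC !exprM => /eqP.
by rewrite (eq_prim_root_expr p2).
Qed.

Lemma one_neq0 : (1 : F) != 0.
Proof. exact: oner_neq0. Qed.

Lemma two_neq0 : (2 : F) != 0.
Proof.
rewrite -(dvdn_pcharf (pchar_Fp pr_p) 2).
apply/negP => /dvdn_leq H; have := H isT; have := p_ge5; lia.
Qed.

Lemma neq01 (a : F) : (a == a + 1) = false.
Proof. by rewrite -subr_eq0 opprD addrA subrr sub0r oppr_eq0 oner_eq0. Qed.

Lemma neq02 (a : F) : (a == a + 2) = false.
Proof. by rewrite -subr_eq0 opprD addrA subrr sub0r oppr_eq0 (negPf two_neq0). Qed.

Lemma neq_av (u v : 'I_n) : av u != av v -> u != v.
Proof. by apply: contraNneq => ->. Qed.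

Definition rot (t : nat) (c : 'rV[F]_n) : 'rV[F]_n :=
  \row_(j < n) c ord0 (Ordinal (ltn_pmod (j + t) n_gt0)).

Lemma vec_poly0 : vec_poly (0 : 'rV[F]_n) = 0.
Proof. by rewrite /vec_poly big1 // => i _; rewrite mxE scale0r. Qed.

Lemma XnB_dvd m : ('X^n - 1 : {poly F}) %| 'X^m - 'X^(m %% n).
Proof.
rewrite {1}(divn_eq m n) exprD (mulnC (m %/ n)%N n) (exprM 'X n (m %/ n)%N).
rewrite -{2}['X^(m %% n)]mul1r -mulrBl [X in _ %| X * _]subrX1.
by apply: dvdp_mulr; apply: dvdp_mulr; exact: dvdpp.
Qed.

Lemma coprime_gX t : coprimep g ('X^t).
Proof.
apply: coprimep_expr.
have : coprimep g ('X - 0%:P); last by rewrite polyC0 subr0.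
rewrite coprimep_XsubC !rootM negb_or -polyC1 !root_XsubC !(eq_sym 0).
by rewrite oner_eq0 (negPf om_neq0) expf_eq0 (negPf om_neq0) andbF.
Qed.

Lemma rot_in t c : c \in cyclic_code n g -> rot t c \in cyclic_code n g.
Proof.
rewrite !memC => H.
pose sg (j : 'I_n) : 'I_n := Ordinal (ltn_pmod (j + t) n_gt0).
have sinj : injective sg.
  move=> j1 j2 /(congr1 val) /= /eqP; rewrite eqn_modDr !modn_small // => /eqP.
  exact: val_inj.
have Hd : ('X^n - 1) %| vec_poly (rot t c) * 'X^t - vec_poly c.
  rewrite {2}/vec_poly (reindex_inj sinj) /vec_poly mulr_suml -sumrB.
  apply: dvdp_big => j _; rewrite mxE -scalerAl -exprD -scalerBr -mul_polyC.
  exact/dvdp_mull/XnB_dvd.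
have : g %| vec_poly (rot t c) * 'X^t.
  rewrite -(subrK (vec_poly c) (vec_poly (rot t c) * 'X^t)).
  by apply: dvdp_add => //; exact: dvdp_trans g_dvd_Xn Hd.
by rewrite Gauss_dvdpl // coprime_gX.
Qed.

Lemma small_support (c : 'rV[F]_n) : c \in cyclic_code n g ->
  (forall j : 'I_n, (5 <= j)%N -> c ord0 j = 0) -> c = 0.
Proof.
rewrite memC => H Hs.
have sz : (size (vec_poly c) <= 5)%N.
  apply/leq_sizeP => j hj; case: (ltnP j n) => hjn.
    by rewrite (coef_vec_poly c (Ordinal hjn)); exact: Hs.
  exact: coef_vec_poly_out.
have : vec_poly c = 0.
  case: (eqVneq (vec_poly c) 0) => // nz; have := dvdp_leq nz H; rewrite size_g => h7.
  by move: sz h7; move: (size (vec_poly c)) => k; lia.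
by rewrite -vec_poly0 => /vec_poly_inj.
Qed.

Lemma n01 (a : F) : (a == a + 1) = false.
Proof. by rewrite -subr_eq0 opprD addrA subrr sub0r oppr_eq0 oner_eq0. Qed.

Lemma n02 (a : F) : (a == a + 1 + 1) = false.
Proof.
have t : (1 + 1 : F) != 0 by rewrite -mulr2n two_neq0.
by rewrite -subr_eq0 -addrA opprD addrA subrr sub0r oppr_eq0 (negPf t).
Qed.

Lemma n12 (a : F) : (a + 1 == a + 1 + 1) = false.
Proof. exact: n01. Qed.

Ltac avneq := apply: neq_av; rewrite ?av_S;
  first [ by rewrite ?n01 ?n02 ?n12 | by rewrite eq_sym ?n01 ?n02 ?n12 ].

Section Lower.
Variable d : 'rV[F]_n.
Hypothesis dC : d \in cyclic_code n g.
Local Notation c := (d ord0).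
Local Notation S := [set i | d ord0 i != 0].

Lemma Mav (h : {poly F}) : (size h <= 4)%N -> \sum_i c i * h.[av i] = 0.
Proof. exact: M_mom dC h. Qed.

Lemma Wbv (h : {poly F}) : (size h <= 3)%N -> \sum_i c i * h.[bv i] = 0.
Proof. exact: W_mom dC h. Qed.

Lemma PA : (#|S| <= 4)%N -> forall i, c i != 0 ->
  exists j, [/\ j != i, c j != 0 & av j = av i].
Proof.
move=> hS; apply: (partner (z := av) (t := 4)); first exact: Mav.
exact: leq_trans (leq_imset_card _ _) hS.
Qed.

Lemma PB : (#|S| <= 3)%N -> forall i, c i != 0 ->
  exists j, [/\ j != i, c j != 0 & bv j = bv i].
Proof.
move=> hS; apply: (partner (z := bv) (t := 3)); first exact: Wbv.
exact: leq_trans (leq_imset_card _ _) hS.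
Qed.

Lemma ucard (s : seq 'I_n) : uniq s -> all (fun x => c x != 0) s -> (size s <= #|S|)%N.
Proof.
move=> us /allP al; apply: uniq_card => //; apply/allP => x xs; rewrite inE.
exact: al.
Qed.

Lemma case_le3 : (#|S| <= 3)%N -> forall i0, c i0 != 0 -> False.
Proof.
move=> h3 i0 ci0.
have h4 : (#|S| <= 4)%N by apply: leq_trans h3 _.
have [j [ji cj aj]] := PA h4 ci0.
have [k [ki ck bk]] := PB h3 ci0.
have ak : av k != av i0 by apply/eqP => e; move/eqP: ki; apply; exact: crt e bk.
have [m [mk cm am]] := PA h4 ck.
have u : uniq [:: i0; j; k; m].
  apply: uniq4; rewrite ?(eq_sym i0) //.
  - by apply: neq_av; rewrite am.
  - by apply: neq_av; rewrite aj eq_sym.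
  - by apply: neq_av; rewrite aj am eq_sym.
  - by rewrite eq_sym.
have := ucard u; rewrite /= ci0 cj ck cm => /(_ isT) H; have := leq_trans H h3.
by [].
Qed.

Lemma chain3 x : (#|S| <= 4)%N -> c x != 0 -> c (ordS x) != 0 ->
  c (ordS (ordS x)) != 0 -> False.
Proof.
move=> h4 cx cx1 cx2.
have [j [jx cj aj]] := PA h4 cx.
have [j' [jx1 cj' aj']] := PA h4 cx1.
have u : uniq [:: x; ordS x; ordS (ordS x); j; j'].
  apply: uniq5; rewrite ?(eq_sym x) ?(eq_sym (ordS x)) //.
  all: try avneq.
  all: try (apply: neq_av; rewrite ?aj ?aj' ?av_S;
    first [ by rewrite ?n01 ?n02 ?n12 | by rewrite eq_sym ?n01 ?n02 ?n12 ]).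
have := ucard u; rewrite /= cx cx1 cx2 cj cj' => /(_ isT) H; have := leq_trans H h4.
by [].
Qed.

Lemma case4 x y : (#|S| <= 4)%N -> x != y -> c x != 0 -> c (ordS x) != 0 ->
  c y != 0 -> c (ordS y) != 0 -> False.
Proof.
move=> h4 xy cx cx1 cy cy1.
case: (eqVneq y (ordS x)) => [e|yx1].
  by apply: (chain3 h4 cx cx1); rewrite -e.
case: (eqVneq x (ordS y)) => [e|xy1].
  by apply: (chain3 h4 cy cy1); rewrite -e.
set x1 := ordS x in cx1 yx1 *; set y1 := ordS y in cy1 xy1 *.
have ax1 : av x1 = av x + 1 by rewrite /x1 av_S.
have ay1 : av y1 = av y + 1 by rewrite /y1 av_S.
have u : uniq [:: x; x1; y; y1].
  apply: uniq4 => //.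
  - by apply: neq_av; rewrite ax1 n01.
  - by rewrite eq_sym.
  - by apply/negP => /eqP /ordS_inj /eqP; apply/negP.
  - by apply: neq_av; rewrite ay1 n01.
have hout : forall z, z \notin [:: x; x1; y; y1] -> c z = 0.
  move=> z hz; apply/eqP; apply/negPn/negP => cz.
  have uz : uniq (z :: [:: x; x1; y; y1]) by rewrite cons_uniq hz u.
  have := ucard uz; rewrite /= cz cx cx1 cy cy1 => /(_ isT) H.
  by have := leq_trans H h4.
have inl : forall z, c z != 0 -> z \in [:: x; x1; y; y1].
  by move=> z cz; apply/negPn/negP => /hout /eqP; apply/negP.
have ay : av y = av x.
  have [j [jx cj aj]] := PA h4 cx.
  move: (inl j cj); rewrite !inE => /or4P [] /eqP ej; subst j.
  - by rewrite eqxx in jx.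
  - by move: aj; rewrite ax1 => /eqP; rewrite eq_sym n01.
  - by [].
  - have [j' [jx1 cj' aj']] := PA h4 cx1.
    move: (inl j' cj'); rewrite !inE => /or4P [] /eqP ej; subst j'.
    + by move: aj'; rewrite ax1 => /eqP; rewrite n01.
    + by rewrite eqxx in jx1.
    + by move: aj; rewrite ay1 aj' ax1 => /eqP; rewrite eq_sym n02.
    + by move: aj'; rewrite aj ax1 => /eqP; rewrite n01.
have sum4' : forall f : 'I_n -> F, (forall i, c i = 0 -> f i = 0) ->
    \sum_i f i = f x + f x1 + f y + f y1.
  by move=> f hf; apply: sum4 => // i /hout /hf.
have := Mav (h := 'X - (av x + 1)%:P); rewrite size_XsubC => /(_ isT) E1.
rewrite sum4' in E1; last by move=> i ->; rewrite mul0r.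
rewrite !hornerXsubC ax1 ay1 ay in E1.
have cyx : c y = - c x.
  apply/eqP; rewrite -addr_eq0; apply/eqP.
  have := congr1 (fun v => - v) E1; rewrite oppr0 => <-; ring.
have := Mav (h := 'X - (av x)%:P); rewrite size_XsubC => /(_ isT) E2.
rewrite sum4' in E2; last by move=> i ->; rewrite mul0r.
rewrite !hornerXsubC ax1 ay1 ay in E2.
have cy1x : c y1 = - c x1.
  apply/eqP; rewrite -addr_eq0; apply/eqP.
  by rewrite -[RHS]E2; ring.
have bx1 : bv x1 = bv x * omega by rewrite /x1 bv_S.
have by1 : bv y1 = bv y * omega by rewrite /y1 bv_S.
have := Wbv (h := 'X); rewrite size_polyX => /(_ isT) E3.
rewrite sum4' in E3; last by move=> i ->; rewrite mul0r.
rewrite !hornerX bx1 by1 cyx cy1x in E3.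
have := Wbv (h := 'X^2); rewrite size_polyXn => /(_ isT) E4.
rewrite sum4' in E4; last by move=> i ->; rewrite mul0r.
rewrite !hornerXn bx1 by1 cyx cy1x in E4.
have F1 : (bv x - bv y) * (c x + omega * c x1) = 0 by rewrite -E3; ring.
have F2 : (bv x ^+ 2 - bv y ^+ 2) * (c x + omega ^+ 2 * c x1) = 0 by rewrite -E4; ring.
have bxy : bv x - bv y != 0.
  by rewrite subr_eq0; apply/negP => /eqP /(crt (esym ay)) e; move: xy; rewrite e eqxx.
have bxy2 : bv x ^+ 2 - bv y ^+ 2 != 0.
  by rewrite subr_eq0; apply/negP => /eqP /(crt2 (esym ay)) e; move: xy; rewrite e eqxx.
move/eqP: F1; rewrite mulf_eq0 (negPf bxy) /= => /eqP G1.
move/eqP: F2; rewrite mulf_eq0 (negPf bxy2) /= => /eqP G2.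
have : (omega - omega ^+ 2) * c x1 = 0.
  by rewrite -[RHS](subrr 0) -{1}G1 -G2; ring.
move/eqP; rewrite mulf_eq0 (negPf cx1) orbF subr_eq0 eq_sym.
by rewrite (negPf om2_neq_om).
Qed.

Lemma case5 e : #|S| = 5%N -> c e != 0 -> c (ordS e) = 0 ->
  (forall x, c x != 0 -> x != e -> c (ordS x) != 0) -> False.
Proof.
move=> h5 ce ce1 hnext.
have hn := n_ge15.
have reach : forall x, c x != 0 -> exists k, (k <= 4)%N /\ iter k (@ordS n) x = e.
  move=> x cx.
  case: (pickP (fun k : 'I_5 => iter k (@ordS n) x == e)) => [k /eqP hk|none].
    by exists k; split => //; rewrite -ltnS.
  exfalso.
  have K : forall k, (k <= 5)%N -> c (iter k (@ordS n) x) != 0.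
    elim=> [|k IH] hk //=; apply: hnext; first by apply: IH; apply: ltnW.
    by have := none (Ordinal hk) => /= ->.
  pose f (k : 'I_6) := iter k (@ordS n) x.
  have finj : injective f.
    move=> k1 k2 /(congr1 (@nat_of_ord n)); rewrite /f !iter_ordS_val => /eqP.
    rewrite eqn_modDl !modn_small; last 2 first.
    - by apply: leq_trans (ltn_ord k2) _; lia.
    - by apply: leq_trans (ltn_ord k1) _; lia.
    by move/eqP; apply: val_inj.
  have sub : [set f k | k in [set: 'I_6]] \subset S.
    by apply/subsetP => y /imsetP [k _ ->]; rewrite inE; apply: K; rewrite -ltnS.
  have := subset_leq_card sub; rewrite card_imset // cardsT card_ord h5.
  by [].
pose t := (e + n - 4)%N.
have rC := rot_in t dC.
have r0 : rot t d = 0.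
  apply: small_support => // j hj; rewrite mxE.
  set z := Ordinal _.
  apply/eqP; apply/negPn/negP => cz.
  have [k [hk hz]] := reach z cz.
  have := congr1 (@nat_of_ord n) hz; rewrite iter_ordS_val /= modnDml.
  have -> : (j + t + k = e + (j + k - 4) + n)%N by rewrite /t; have := ltn_ord j; lia.
  rewrite modnDr mod_lt2n; last by have := ltn_ord j; have := ltn_ord e; lia.
  case: ltnP => hc; have := ltn_ord j; have := ltn_ord e; move: hj hk hc; lia.
have h4n : (4 < n)%N by lia.
have := congr1 (fun r : 'rV[F]_n => r ord0 (Ordinal h4n)) r0.
rewrite /= !mxE => E.
move: ce; rewrite (_ : e = Ordinal (ltn_pmod (4 + t) n_gt0)) ?E ?eqxx //.
apply: val_inj => /=; rewrite /t.
have -> : (4 + (e + n - 4) = e + n)%N by lia.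
by rewrite modnDr modn_small.
Qed.

End Lower.

Lemma lower (d : 'rV[F]_n) : d \in cyclic_code n g -> d != 0 ->
  (7 <= #|[set i | (d ord0 i != 0%R) || (d ord0 (ordS i) != 0%R)]|)%N.
Proof.
move=> dC d0.
set S := [set i | d ord0 i != 0].
set S' := [set i | d ord0 (ordS i) != 0].
have -> : [set i | (d ord0 i != 0) || (d ord0 (ordS i) != 0)] = S :|: S'.
  by apply/setP => i; rewrite !inE.
have cS' : #|S'| = #|S|.
  rewrite -[RHS](card_preimset _ (@ordS_inj n)); apply: eq_card => i.
  by rewrite !inE.
have cT := cardsU S S'; rewrite cS' in cT.
set A := S :&: S' in cT.
have AS : A \subset S by apply: subsetIl.
have cAS := subset_leq_card AS.
have [i0 ci0] : exists i, d ord0 i != 0.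
  case: (pickP (fun i => d ord0 i != 0)) => [i ci|none]; first by exists i.
  move/eqP: d0; case; apply/rowP => i; rewrite mxE.
  by have := none i => /negbFE /eqP.
have hn := n_ge15.
rewrite leqNgt; apply/negP => hT; rewrite cT in hT.
have closed_contra : (forall x, x \in S -> ordS x \in S) -> False.
  move=> H.
  have full : #|S| = n.
    transitivity #|[set: 'I_n]|; last by rewrite cardsT card_ord.
    apply: eq_card => y; rewrite in_setT; symmetry.
    have i0S : i0 \in S by rewrite inE.
    by rewrite (closed_full i0S H y).
  move: hT cAS; rewrite full; lia.
case: (leqP #|S| 3) => h3.
  exact: (case_le3 dC h3 ci0).
case: (leqP #|S| 4) => h4.
  have : (1 < #|A|)%N by lia.
  case/card_gt1P => x [y [xA yA xy]].
  move: xA yA; rewrite !inE => /andP [cx cx1] /andP [cy cy1].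
  exact: (case4 dC h4 xy cx cx1 cy cy1).
case: (leqP #|S| 5) => h5.
  have e5 : #|S| = 5%N by lia.
  case: (pickP (fun x => (d ord0 x != 0) && (d ord0 (ordS x) == 0))) => [e /andP [ce /eqP ce1]|none]; last first.
    apply: closed_contra => x; rewrite !inE => cx.
    by have := none x; rewrite cx /= => /negbT.
  apply: (case5 dC e5 ce ce1) => x cx xe.
  have sub : A \subset S :\ e.
    apply/subsetP => y; rewrite !inE => /andP [cy cy1]; rewrite cy andbT.
    by apply/eqP => ye; move: cy1; rewrite ye ce1 eqxx.
  have cD : #|S :\ e| = 4%N by move: e5; rewrite (cardsD1 e) inE ce; case.
  have := subset_leq_card sub; rewrite cD => hA.
  have eqA : #|A| = #|S :\ e| by rewrite cD; lia.
  have : x \in A by rewrite (subset_cardP eqA sub) !inE cx xe.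
  by rewrite !inE => /andP [_ ->].
have eqA : #|A| = #|S| by lia.
apply: closed_contra => x xS.
have : x \in A by rewrite (subset_cardP eqA AS).
by rewrite !inE => /andP [_ h].
Qed.

Lemma main : AMDS_pair_code (cyclic_code n g) 7.
Proof.
split; last exact: card_C.
split.
- exists c0, 0; split.
  + exact: c0_in.
  + by rewrite memC vec_poly0 dvdp0.
  + apply/eqP => e; move: c0_dist; rewrite e /pair_dist.
    rewrite (_ : [set i | _] = set0); first by rewrite cards0.
    by apply/setP => i; rewrite !inE !eqxx.
  + exact: c0_dist.
- move=> x y xC yC xy.
  have dC : x - y \in cyclic_code n g.
    by move: xC yC; rewrite !memC vec_polyB; apply: dvdp_sub.
  have d0 : x - y != 0 by rewrite subr_eq0.
  move: (lower dC d0) => H.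
  rewrite /pair_dist (_ : [set i | _] = [set i | ((x - y) ord0 i != 0) || ((x - y) ord0 (ordS i) != 0)]); first exact: H.
  by apply/setP => i; rewrite !inE !mxE !subr_eq0.
Qed.

End Main.

Unset Implicit Arguments.

Theorem theorem3p11 (p l : nat) (omega : 'F_p) :
  prime p -> odd p -> odd l -> (3 <= l)%N -> (l %| p.-1)%N ->
  l.-primitive_root omega ->
  AMDS_pair_code
    (@cyclic_code _ (l * p)
       (('X - 1) ^+ 4 * ('X - omega%:P) * ('X - (omega ^+ 2)%:P)))
    7.
Proof. by move=> pr op ol l3 ld pm; apply: main. Qed.
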